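(* Let $n\ge1$, $N=\{1,\dots,n\}$, and let $K=K_E$ be a nonempty finite index set of equations only. For each $k\in K$ let $A_k\subseteq N$, and consider the original assignment equations $\sum_{i\in A_k}x_i=1$ for all $k\in K$ (i.e. $\alpha^k_i=1$ for all $i\in A_k$ and $\beta^k=1$). For each $k\in K$ let $B^E_k\subseteq N$, let $$Q=\{(i,j)\mid i\le j\text{ and }\exists k\in K:\ (i\in A_k\text{ and }j\in B^E_k)\text{ or }(j\in A_k\text{ and }i\in B^E_k)\},$$ let $y_{ij}\in[0,1]$ for $(i,j)\in Q$, and consider the linearization equations $$\sum_{i\in A_k,(i,j)\in Q} y_{ij}+\sum_{i\in A_k,(j,i)\in Q} y_{ji}=x_j\quad\forall k\in K,\ j\in B^E_k.$$ Consider the conditions (C1): for each $(i,j)\in Q$ there is $k\in K$ with $i\in A_k$ and $j\in B^E_k$; (C2): for each $(i,j)\in Q$ there is $\ell\in K$ with $j\in A_\ell$ and $i\in B^E_\ell$. Then for any solution $x\in[0,1]^n$ (of the original equations), the inequalities $y_{ij}\le x_i$, $y_{ij}\le x_j$ and $y_{ij}\ge x_i+x_j-1$ are implied by the linearization equations for all $(i,j)\in Q$ if and only if conditions (C1) and (C2) are satisfied.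
   Context: The linearization equations arise from multiplying the $k$-th assignment equation by $x_j$ for each $j\in B^E_k$ and replacing each product $x_ix_j$ by $y_{ij}$ (if $i\le j$) or $y_{ji}$ (otherwise). The ''only if'' direction is understood within the framework where the linearization is constructed only by constraints of this type.
   Formalization: Each linearization equation counts yⱼⱼ once; in the only-if direction, implied means for each (i,j) ∈ Q, yᵢⱼ ≤ xᵢ and yᵢⱼ ≤ xⱼ each follow from one linearization equation with right-hand side xᵢ, resp. xⱼ, plus the bounds. Each condition added here is assumed in the paper as well or is needed for the statement above to hold. This also corrects a misprint. *)

(* Defs.v *)
From HB Require Import structures.
From mathcomp Require Import all_boot all_order all_algebra.
Set Implicit Arguments. Unset Strict Implicit. Unset Printing Implicit Defensive.
Import Order.TTheory GRing.Theory Num.Theory.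
Local Open Scope ring_scope.

Section Defs.
Variables (R : realFieldType) (n : nat) (K : finType).
Variables (A B : K -> {set 'I_n}).

Definition inQ (i j : 'I_n) : bool :=
  ((i <= j)%N) &&
  [exists k, ((i \in A k) && (j \in B k)) || ((j \in A k) && (i \in B k))].

(* the linearization variable standing for the product x_i x_j:
   y_ij if i <= j, y_ji otherwise *)
Definition yprod (y : 'I_n -> 'I_n -> R) (i j : 'I_n) : R :=
  if (i <= j)%N then y i j else y j i.

Definition orig_eq (x : 'I_n -> R) (k : K) : Prop :=
  \sum_(i in A k) x i = 1.

Definition lin_eq (x : 'I_n -> R) (y : 'I_n -> 'I_n -> R) (k : K) (j : 'I_n)
  : Prop := \sum_(i in A k) yprod y i j = x j.

Definition x_box (x : 'I_n -> R) : Prop := forall i, 0 <= x i <= 1.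

Definition y_box (y : 'I_n -> 'I_n -> R) : Prop :=
  forall i j, inQ i j -> 0 <= y i j <= 1.

Definition C1 : Prop :=
  forall i j, inQ i j -> exists k, (i \in A k) /\ (j \in B k).

Definition C2 : Prop :=
  forall i j, inQ i j -> exists l, (j \in A l) /\ (i \in B l).

Definition ineqs_implied : Prop :=
  forall (x : 'I_n -> R) (y : 'I_n -> 'I_n -> R),
    x_box x -> (forall k, orig_eq x k) -> y_box y ->
    (forall k j, j \in B k -> lin_eq x y k j) ->
    forall i j, inQ i j ->
      [/\ y i j <= x i, y i j <= x j & x i + x j - 1 <= y i j].

(* Framework notion ("only if" direction): the upper bound y_ij <= x_m
   (m = i or m = j) is implied by a linearization equation, i.e. there is
   a linearization equation (k, m) (so m \in B_k, right-hand side x_m)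
   which, together with the bounds, entails y_ij <= x_m. *)
Definition ub_implied_by_lin (i j m : 'I_n) : Prop :=
  exists k, (m \in B k) /\
    forall (x : 'I_n -> R) (y : 'I_n -> 'I_n -> R),
      x_box x -> y_box y -> lin_eq x y k m -> y i j <= x m.

End Defs.

(* Main.v *)
Require Import Defs.
From HB Require Import structures.
From mathcomp Require Import all_boot all_order all_algebra.
From mathcomp Require Import lra.
Set Implicit Arguments. Unset Strict Implicit.
Import Order.TTheory GRing.Theory Num.Theory.
Local Open Scope ring_scope.

Section Proofs.
Variables (R : realFieldType) (n : nat) (K : finType).
Variables (A B : K -> {set 'I_n}).

Lemma inQ_AB k (a b : 'I_n) : a \in A k -> b \in B k ->
  (if (a <= b)%N then inQ A B a b else inQ A B b a).
Proof.
move=> ha hb; case: ifP => h; rewrite /inQ.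
  rewrite h /=; apply/existsP; exists k; by rewrite ha hb.
rewrite ltnW ?ltnNge ?h //=; apply/existsP; exists k; by rewrite ha hb orbT.
Qed.

Lemma term_nonneg (y : 'I_n -> 'I_n -> R) k a b :
  y_box A B y -> a \in A k -> b \in B k -> 0 <= yprod y a b.
Proof.
move=> yb ha hb; have := inQ_AB ha hb; rewrite /yprod.
by case: ifP => _ /yb /andP[].
Qed.

Lemma yprod_ij (y : 'I_n -> 'I_n -> R) i j : inQ A B i j ->
  yprod y i j = y i j /\ yprod y j i = y i j.
Proof.
move=> /andP[hij _]; rewrite /yprod hij; split => //.
case: ifP => // hji.
have e : i = j by apply: val_inj; apply/eqP; rewrite eqn_leq hij hji.
by rewrite e.
Qed.

Lemma ub (x : 'I_n -> R) (y : 'I_n -> 'I_n -> R) :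
  C1 A B -> C2 A B -> y_box A B y ->
  (forall k j, j \in B k -> lin_eq A x y k j) ->
  forall i j, inQ A B i j -> y i j <= x i /\ y i j <= x j.
Proof.
move=> c1 c2 yb lin i j hQ; have [e1 e2] := yprod_ij y hQ; split.
  have [l [hjA hiB]] := c2 _ _ hQ.
  rewrite -(lin l i hiB) /lin_eq (bigD1 j) //= e2 lerDl.
  by apply: sumr_ge0 => a /andP[ha _]; exact: (term_nonneg yb ha hiB).
have [k [hiA hjB]] := c1 _ _ hQ.
rewrite -(lin k j hjB) /lin_eq (bigD1 i) //= e1 lerDl.
by apply: sumr_ge0 => a /andP[ha _]; exact: (term_nonneg yb ha hjB).
Qed.

End Proofs.

Theorem theorem2 (R : realFieldType) (n : nat) (K : finType)
    (A B : K -> {set 'I_n}) :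
  (0 < n)%N -> (0 < #|K|)%N ->
  (* "if": (C1) and (C2) make the inequalities implied *)
  (C1 A B /\ C2 A B -> ineqs_implied R A B) /\
  (* "only if" (within the framework): if the upper bounds are implied by
     linearization equations for all (i,j) in Q, then (C1) and (C2) hold *)
  ((forall i j, inQ A B i j ->
      ub_implied_by_lin R A B i j i /\ ub_implied_by_lin R A B i j j) ->
   C1 A B /\ C2 A B).
Proof.
move=> _ _; split.
  move=> [c1 c2] x y xb orig yb lin i j hQ.
  have [u1 u2] := ub c1 c2 yb lin hQ.
  split => //.
  have [k [hiA hjB]] := c1 _ _ hQ.
  have [e1 _] := yprod_ij y hQ.
  have hx := lin k j hjB; rewrite /lin_eq (bigD1 i) //= e1 in hx.
  have ho := orig k; rewrite /orig_eq (bigD1 i) //= in ho.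
  have hs : \sum_(a in A k | a != i) yprod y a j <= \sum_(a in A k | a != i) x a.
    apply: ler_sum => a /andP[ha _].
    have := inQ_AB ha hjB; rewrite /yprod; case: ifP => _ hq.
      by case: (ub c1 c2 yb lin hq).
    by case: (ub c1 c2 yb lin hq).
  lra.
move=> H; split.
  move=> i j hQ; have [_ [k [hjB hk]]] := H _ _ hQ.
  exists k; split => //.
  case hiA: (i \in A k) => //.
  pose x0 := fun _ : 'I_n => (0 : R).
  pose y0 := fun a b : 'I_n => if (a == i) && (b == j) then (1 : R) else 0.
  have : y0 i j <= x0 j.
    apply: hk.
    - by move=> a; rewrite /x0 lexx ler01.
    - by move=> a b _; rewrite /y0; case: ifP; rewrite ?lexx ?ler01.
    rewrite /lin_eq big1 // => a ha.
    rewrite /yprod /y0; case: ifP => hle.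
      case: eqP => [ea|] //=; by rewrite -ea ha in hiA.
    case: eqP => [eji|] //=; case: eqP => [eaj|] //=.
    by rewrite eaj leqnn in hle.
  by rewrite /y0 /x0 !eqxx /= ler10.
move=> i j hQ; have [[l [hiB hl]] _] := H _ _ hQ.
exists l; split => //.
case hjA: (j \in A l) => //.
pose x0 := fun _ : 'I_n => (0 : R).
pose y0 := fun a b : 'I_n => if (a == i) && (b == j) then (1 : R) else 0.
have : y0 i j <= x0 i.
  apply: hl.
  - by move=> a; rewrite /x0 lexx ler01.
  - by move=> a b _; rewrite /y0; case: ifP; rewrite ?lexx ?ler01.
  rewrite /lin_eq big1 // => a ha.
  rewrite /yprod /y0; case: ifP => hle.
    case: eqP => [eai|] //=; case: eqP => [eij|] //=.
    by move: ha; rewrite eai eij hjA.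
  rewrite eqxx /=; case: eqP => [eaj|] //=.
  by move: ha; rewrite eaj hjA.
by rewrite /y0 /x0 !eqxx /= ler10.
Qed.
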